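(* Let $(A,\gamma)$ be a partially ordered set. If $\mathrm{hsdim}(A,\gamma)=1$, then $\gamma$ is a half-space, and $\dim(A,\gamma)=1$ if $\gamma$ is a linear order while $\dim(A,\gamma)=2$ if $\gamma$ is not a linear order. If $\mathrm{hsdim}(A,\gamma)\ge2$, then $\dim(A,\gamma)=\mathrm{hsdim}(A,\gamma)$.
   Context: A quasiorder on $A$ is a reflexive and transitive relation; $\Delta_A=\{(a,a)\mid a\in A\}$. A quasiorder $\alpha$ on $A$ is a half-space if there is a quasiorder $\beta$ on $A$ with $\alpha\cup\beta=A\times A$ and $\alpha\cap\beta=\Delta_A$. A half-space realizer of a quasiorder $\gamma$ on $A$ is a set $\{\alpha_i\mid i\in I\}$ of half-spaces on $A$ with $\bigcap_{i\in I}\alpha_i=\gamma$; $\mathrm{hsdim}(A,\gamma)$ is the minimum cardinality of a half-space realizer. $\dim(A,\gamma)$ is the order dimension: the least cardinality of a set of linear extensions of $\gamma$ whose intersection is $\gamma$. *)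

(* Defs.v *)
(* relations on an arbitrary type A, cardinalities as index types. *)
Set Implicit Arguments.

Definition relation (A : Type) := A -> A -> Prop.

Definition quasiorder {A : Type} (r : relation A) : Prop :=
  (forall a, r a a) /\ (forall a b c, r a b -> r b c -> r a c).

Definition partial_order {A : Type} (r : relation A) : Prop :=
  quasiorder r /\ (forall a b, r a b -> r b a -> a = b).

Definition linear_order {A : Type} (r : relation A) : Prop :=
  partial_order r /\ (forall a b, r a b \/ r b a).

Definition half_space {A : Type} (alpha : relation A) : Prop :=
  quasiorder alpha /\
  exists beta : relation A, quasiorder beta /\
    (forall a b, alpha a b \/ beta a b) /\
    (forall a b, (alpha a b /\ beta a b) <-> a = b).

Definition linear_extension {A : Type} (gamma L : relation A) : Prop :=
  linear_order L /\ (forall a b, gamma a b -> L a b).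

Definition intersection_is {A I : Type} (F : I -> relation A) (gamma : relation A) : Prop :=
  forall a b, (forall i, F i a b) <-> gamma a b.

Definition hs_realizer {A I : Type} (gamma : relation A) (F : I -> relation A) : Prop :=
  (forall i, half_space (F i)) /\ intersection_is F gamma.

Definition lin_realizer {A I : Type} (gamma : relation A) (F : I -> relation A) : Prop :=
  (forall i, linear_extension gamma (F i)) /\ intersection_is F gamma.

Definition injective {X Y : Type} (f : X -> Y) : Prop :=
  forall x y, f x = f y -> x = y.

(* "The cardinality |I| is the minimum cardinality of a realizer":
   there is a realizer indexed by I, and every realizer indexed by J
   admits an injection I -> J (i.e. |I| <= |J|). *)
Definition is_hsdim {A : Type} (gamma : relation A) (I : Type) : Prop :=
  (exists F : I -> relation A, hs_realizer gamma F) /\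
  (forall (J : Type) (G : J -> relation A), hs_realizer gamma G ->
     exists f : I -> J, injective f).

Definition is_dim {A : Type} (gamma : relation A) (I : Type) : Prop :=
  (exists F : I -> relation A, lin_realizer gamma F) /\
  (forall (J : Type) (G : J -> relation A), lin_realizer gamma G ->
     exists f : I -> J, injective f).

Definition card_one (I : Type) : Prop := exists i : I, forall j : I, j = i.
Definition card_ge2 (I : Type) : Prop := exists i j : I, i <> j.

(* Main.v *)
Require Import Defs.
From Stdlib Require Import Classical ClassicalEpsilon.
From mathcomp Require ssreflect ssrbool boolp classical_sets.
Module SzM.
Import ssreflect ssrbool boolp classical_sets.

Section Sz.
Variables (A : Type) (P0 : relation A).
Hypothesis HP0 : partial_order P0.

Definition PO := {P : relation A | partial_order P /\ (forall a b, P0 a b -> P a b)}.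
Definition Rsub (s t : PO) : bool := `[< forall a b, proj1_sig s a b -> proj1_sig t a b >].

Lemma RsubP s t : Rsub s t <-> (forall a b, proj1_sig s a b -> proj1_sig t a b).
Proof. by split => [/asboolP|H]; [|apply/asboolP]. Qed.

Lemma szpilrajn_aux : exists K, linear_order K /\ forall a b, P0 a b -> K a b.
Proof.
have [t Ht] : exists t : PO, forall s, Rsub t s -> s = t.
  apply: (@Zorn PO Rsub).
  - by move=> s; apply/RsubP.
  - by move=> r s t /RsubP H1 /RsubP H2; apply/RsubP => a b /H1 /H2.
  - move=> [s Hs] [t' Ht'] /RsubP H1 /RsubP H2.
    have E : s = t'.
      apply: functional_extensionality_dep => a; apply: functional_extensionality_dep => b.
      by apply: propext; split; [apply: H1|apply: H2].
    subst t'; by rewrite (Prop_irrelevance Hs Ht').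
  - move=> C Ctot.
    pose U := fun a b => P0 a b \/ exists s, C s /\ proj1_sig s a b.
    have HU : partial_order U /\ (forall a b, P0 a b -> U a b).
      split; last by move=> a b H; left.
      case: HP0 => [[Pr Pt] Pa].
      split; first split.
      + by move=> a; left; apply: Pr.
      + move=> a b c [Hab|[s [Cs Hs]]] [Hbc|[s' [Cs' Hs']]].
        * by left; apply: Pt Hab Hbc.
        * right; exists s'; split=> //.
          case: (proj2_sig s') => [[[_ T'] _] Inc]; exact: T' _ _ _ (Inc _ _ Hab) Hs'.
        * right; exists s; split=> //.
          case: (proj2_sig s) => [[[_ T'] _] Inc]; exact: T' _ _ _ Hs (Inc _ _ Hbc).
        * case: (Ctot s s' Cs Cs') => /RsubP Hss.
          -- right; exists s'; split=> //.
             case: (proj2_sig s') => [[[_ T'] _] Inc]; exact: T' _ _ _ (Hss _ _ Hs) Hs'.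
          -- right; exists s; split=> //.
             case: (proj2_sig s) => [[[_ T'] _] Inc]; exact: T' _ _ _ Hs (Hss _ _ Hs').
      + move=> a b [Hab|[s [Cs Hs]]] [Hba|[s' [Cs' Hs']]].
        * exact: Pa.
        * by case: (proj2_sig s') => [[[_ _] An] Inc]; apply: An (Inc _ _ Hab) Hs'.
        * by case: (proj2_sig s) => [[[_ _] An] Inc]; apply: An Hs (Inc _ _ Hba).
        * case: (Ctot s s' Cs Cs') => /RsubP Hss.
          -- by case: (proj2_sig s') => [[[_ _] An] _]; apply: An (Hss _ _ Hs) Hs'.
          -- by case: (proj2_sig s) => [[[_ _] An] _]; apply: An Hs (Hss _ _ Hs').
    exists (exist _ U HU) => s Cs; apply/RsubP => a b H; right; by exists s.
case: t Ht => M HM Ht; case: (HM) => [[[Mr Mt] Ma] Minc].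
exists M; split=> //; split; first by split; [split|].
move=> a b; apply: NNPP => Hn.
have Hab : ~ M a b by move=> H; apply: Hn; left.
have Hba : ~ M b a by move=> H; apply: Hn; right.
pose M' := fun u v => M u v \/ (M u a /\ M b v).
have HM' : partial_order M' /\ (forall a b, P0 a b -> M' a b).
  split; last by move=> x y H; left; apply: Minc.
  split; first split.
  - by move=> x; left.
  - move=> x y z [H1|[H1 H1']] [H2|[H2 H2']].
    + by left; apply: Mt H1 H2.
    + by right; split=> //; apply: Mt H1 H2.
    + by right; split=> //; apply: Mt H1' H2.
    + by exfalso; apply: Hba; apply: Mt H1' H2.
  - move=> x y [H1|[H1 H1']] [H2|[H2 H2']].
    + exact: Ma.
    + by exfalso; apply: Hba; apply: Mt H2' (Mt _ _ _ H1 H2).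
    + by exfalso; apply: Hba; apply: Mt H1' (Mt _ _ _ H2 H1).
    + by exfalso; apply: Hba; apply: Mt H1' H2.
have E : (exist _ M' HM' : PO) = exist _ M HM.
  apply: Ht; apply/RsubP => x y H /=; by left.
have EM : M' = M by have := f_equal (@proj1_sig _ _) E.
apply: Hab; rewrite -EM; right; split; apply: Mr.
Qed.
End Sz.
End SzM.
Import SzM.

Ltac fwd := repeat match goal with
 | H: ?P -> ?Q, H1: ?P |- _ => specialize (H H1)
 end.

Section Lex.
Variable A : Type.

Definition lexr (al K Q : relation A) (x y : A) : Prop :=
  x = y \/ (al x y /\ ~ al y x) \/ (al x y /\ al y x /\ K x y) \/
  (~ al x y /\ ~ al y x /\ Q x y).

Lemma hs_negtrans (al : relation A) : half_space al ->
  forall x y z, ~ al x y -> ~ al y z -> x = z \/ ~ al x z.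
Proof.
intros [_ [be [[_ Bt] [Tot Int]]]] x y z H1 H2.
assert (Bxy : be x y) by (destruct (Tot x y); tauto).
assert (Byz : be y z) by (destruct (Tot y z); tauto).
assert (Bxz := Bt _ _ _ Bxy Byz).
destruct (classic (al x z)) as [H|H]; [left; apply Int; tauto | right; exact H].
Qed.

Lemma lexr_linear al K Q : half_space al -> linear_order K -> linear_order Q ->
  linear_order (lexr al K Q).
Proof.
intros Hal HK HQ.
pose proof (hs_negtrans _ Hal) as Nt.
destruct Hal as [[Ar At] _].
destruct HK as [[[Kr Kt] Ka] Ktot]. destruct HQ as [[[Qr Qt] Qa] Qtot].
unfold lexr. split; [split; [split|]|].
- intros a; left; reflexivity.
- intros x y z H1 H2.
  destruct (classic (x = y)) as [e|nxy]; [subst; exact H2|].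
  destruct (classic (y = z)) as [e|nyz]; [subst; exact H1|].
  destruct (classic (x = z)) as [e|nxz]; [left; exact e|].
  pose proof (At x y z). pose proof (At x z y). pose proof (At y x z).
  pose proof (At y z x). pose proof (At z x y). pose proof (At z y x).
  assert (~al x y -> ~al y z -> ~al x z) by (intros; destruct (Nt x y z); auto; contradiction).
  assert (~al x z -> ~al z y -> ~al x y) by (intros; destruct (Nt x z y); auto; contradiction).
  assert (~al y x -> ~al x z -> ~al y z) by (intros; destruct (Nt y x z); auto; contradiction).
  assert (~al y z -> ~al z x -> ~al y x) by (intros; destruct (Nt y z x); auto; congruence).
  assert (~al z x -> ~al x y -> ~al z y) by (intros; destruct (Nt z x y); auto; congruence).
  assert (~al z y -> ~al y x -> ~al z x) by (intros; destruct (Nt z y x); auto; congruence).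
  clear Nt.
  pose proof (Kt x y z). pose proof (Qt x y z).
  destruct H1 as [H1|[[H1 H1']|[[H1 [H1' H1'']]|[H1 [H1' H1'']]]]]; [contradiction| | | ];
  (destruct H2 as [H2|[[H2 H2']|[[H2 [H2' H2'']]|[H2 [H2' H2'']]]]]; [contradiction| | | ]);
  destruct (classic (al x z)); destruct (classic (al z x)); fwd; try contradiction;
  right; first [left; split; assumption | right; left; repeat split; assumption
   | right; right; repeat split; assumption].
- intros x y H1 H2.
  destruct (classic (x = y)) as [e|nxy]; [exact e|].
  assert (y <> x) by congruence. pose proof (Ka x y); pose proof (Qa x y). tauto.
- intros x y.
  destruct (classic (x = y)) as [e|nxy]; [left; left; exact e|].
  pose proof (Ktot x y); pose proof (Qtot x y).
  destruct (classic (al x y)); destruct (classic (al y x)); tauto.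
Qed.

Lemma lexr_ext (g al K Q : relation A) : (forall a b, g a b -> al a b) ->
  (forall a b, g a b -> K a b) -> forall a b, g a b -> lexr al K Q a b.
Proof.
intros H1 H2 a b H. unfold lexr. right.
destruct (classic (al b a)); [right; left; auto | left; auto].
Qed.
End Lex.
Arguments lexr {A}. Arguments lexr_linear {A}. Arguments lexr_ext {A}. Arguments hs_negtrans {A}.

Section Core.
Variable A : Type.

Lemma rev_linear (K : relation A) : linear_order K -> linear_order (fun a b => K b a).
Proof.
intros [[[Kr Kt] Ka] Ktot]. split; [split; [split|]|].
- intros a; apply Kr.
- intros a b c H1 H2; exact (Kt _ _ _ H2 H1).
- intros a b H1 H2; apply Ka; assumption.
- intros a b; destruct (Ktot a b); auto.
Qed.

Lemma lin_hs (g L : relation A) : linear_extension g L -> half_space L.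
Proof.
intros [[[[Lr Lt] La] Ltot] _]. split; [split; assumption|].
exists (fun a b => L b a). split; [split|split].
- intros a; apply Lr.
- intros a b c H1 H2; exact (Lt _ _ _ H2 H1).
- intros a b; destruct (Ltot a b); auto.
- intros a b; split; [intros [H1 H2]; apply La; assumption | intros ->; split; apply Lr].
Qed.

Lemma core (g : relation A) (I : Type) (F : I -> relation A) (i0 i1 : I) :
  partial_order g -> hs_realizer g F -> i0 <> i1 ->
  exists G : I -> relation A, lin_realizer g G.
Proof.
intros Hg [Hhs Hint] Hi.
assert (Hsub : forall i a b, g a b -> F i a b) by (intros i a b H; apply Hint; exact H).
destruct Hg as [[gr gt] ga].
set (eta := fun a b => (forall i, F i a b \/ ~ F i b a) /\
                       (g a b \/ exists i, ~ (F i b a \/ ~ F i a b))).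
assert (Ptr : forall i a b c, F i a b \/ ~ F i b a -> F i b c \/ ~ F i c b ->
                              F i a c \/ ~ F i c a).
{ intros i a b c H1 H2.
  pose proof (@hs_negtrans A (F i) (Hhs i)) as Nt.
  destruct (Hhs i) as [[Ar At] _].
  destruct H1 as [H1|H1]; destruct H2 as [H2|H2].
  - left; exact (At _ _ _ H1 H2).
  - right; intro H; exact (H2 (At _ _ _ H H1)).
  - right; intro H; exact (H1 (At _ _ _ H2 H)).
  - destruct (Nt c b a H2 H1) as [e|e]; [subst; left; apply Ar | right; exact e]. }
assert (Heta : partial_order eta).
{ split; [split|].
  - intros a; split; [intros i; left; apply (proj1 (proj1 (Hhs i))) | left; apply gr].
  - intros a b c [H1 H1'] [H2 H2']. split.
    + intros i; exact (Ptr i a b c (H1 i) (H2 i)).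
    + destruct H1' as [H1'|[i Hi1]].
      * destruct H2' as [H2'|[i Hi2]]; [left; exact (gt _ _ _ H1' H2')|].
        right; exists i; intro H; apply Hi2. exact (Ptr i c a b H (H1 i)).
      * right; exists i; intro H; apply Hi1. exact (Ptr i b c a (H2 i) H).
  - intros a b [H1 H1'] [H2 H2'].
    destruct H1' as [H1'|[i Hi1]]; [|exfalso; exact (Hi1 (H2 i))].
    destruct H2' as [H2'|[i Hi2]]; [|exfalso; exact (Hi2 (H1 i))].
    apply ga; assumption. }
destruct (szpilrajn_aux _ _ Heta) as [K [HK HKe]].
assert (HKg : forall a b, g a b -> K a b).
{ intros a b H; apply HKe; split; [intros i; left; apply Hsub; exact H | left; exact H]. }
set (Lo := fun i => lexr (F i) K (fun a b => K b a)).
set (L0 := lexr (F i0) K (fun a b => Lo i1 b a)).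
assert (HLo : forall i, linear_order (Lo i)).
{ intros i; apply lexr_linear; [apply Hhs | exact HK | apply rev_linear; exact HK]. }
assert (HL0 : linear_order L0).
{ apply lexr_linear; [apply Hhs | exact HK | apply rev_linear; apply HLo]. }
exists (fun i => if excluded_middle_informative (i = i0) then L0 else Lo i).
assert (HG : forall i, linear_extension g
   (if excluded_middle_informative (i = i0) then L0 else Lo i)).
{ intros i; destruct (excluded_middle_informative (i = i0)); split.
  - exact HL0.
  - apply lexr_ext; [apply Hsub | exact HKg].
  - apply HLo.
  - apply lexr_ext; [apply Hsub | exact HKg]. }
split; [exact HG|].
intros x y; split; [|intros H i; apply (proj2 (HG i)); exact H].
intros Hall. apply NNPP; intro Hng.
assert (nxy : x <> y) by (intro e; subst; apply Hng, gr).
cut (exists i, (if excluded_middle_informative (i = i0) then L0 else Lo i) y x).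
{ intros [i Hyx]. apply nxy.
  destruct (HG i) as [[[_ Ga] _] _]. apply Ga; [apply Hall | exact Hyx]. }
assert (Gi1 : forall i, i <> i0 -> forall a b,
  Lo i a b -> (if excluded_middle_informative (i = i0) then L0 else Lo i) a b).
{ intros i ne a b H; destruct (excluded_middle_informative (i = i0)); [contradiction|exact H]. }
assert (Gi0 : forall a b, L0 a b ->
  (if excluded_middle_informative (i0 = i0) then L0 else Lo i0) a b).
{ intros a b H; destruct (excluded_middle_informative (i0 = i0)); [exact H|contradiction]. }
destruct (classic (~ F i0 x y /\ ~ F i0 y x)) as [[HA1 HA2]|HnA].
{ destruct (proj2 (HLo i1) x y) as [Hl|Hl].
  - exists i0; apply Gi0. unfold L0, lexr. right; right; right; tauto.
  - exists i1; apply Gi1; [congruence | exact Hl]. }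
destruct (classic (exists k, F k y x /\ ~ F k x y)) as [[k [Hk1 Hk2]]|HnB].
{ exists k. destruct (excluded_middle_informative (k = i0)) as [e|e].
  - subst k. unfold L0, lexr. right; left; tauto.
  - unfold Lo, lexr. right; left; tauto. }
assert (HnB' : forall k, F k y x -> F k x y).
{ intros k H; apply NNPP; intro H'; apply HnB; exists k; tauto. }
destruct (not_all_ex_not _ _ (fun H => Hng (proj1 (Hint x y) H))) as [k Hk].
assert (Hk' : ~ F k y x) by (intro H; exact (Hk (HnB' k H))).
assert (kne : k <> i0) by (intro e; subst; tauto).
destruct (proj2 HK x y) as [Kxy|Kyx].
{ exists k; apply Gi1; [exact kne|]. unfold Lo, lexr. right; right; right; tauto. }
destruct (classic (exists f, F f x y /\ F f y x)) as [[f [Hf1 Hf2]]|HnF].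
{ exists f. destruct (excluded_middle_informative (f = i0)) as [e|e].
  - subst f. unfold L0, lexr. right; right; left; tauto.
  - unfold Lo, lexr. right; right; left; tauto. }
exfalso.
assert (Hi0y : ~ F i0 y x) by (intro H; apply HnF; exists i0; split; [apply HnB'|]; assumption).
assert (Hi0x : F i0 x y) by tauto.
assert (Exy : eta x y).
{ split.
  - intros i. destruct (classic (F i y x)) as [H|H]; [left; apply HnB'; exact H | right; exact H].
  - right; exists i0; tauto. }
apply nxy. destruct HK as [[_ Ka] _]. apply Ka; [apply HKe; exact Exy | exact Kyx].
Qed.
End Core.

Lemma lin_to_hs (A : Type) (g : relation A) (J : Type) (G : J -> relation A) :
  lin_realizer g G -> hs_realizer g G.
Proof. intros [H1 H2]; split; [intros j; exact (lin_hs _ _ _ (H1 j)) | exact H2]. Qed.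

Lemma lin_iff (A : Type) (g L : relation A) :
  linear_order L -> (forall a b, g a b <-> L a b) -> linear_order g.
Proof.
intros [[[Lr Lt] La] Lto] H. split; [split; [split|]|].
- intros a; apply H, Lr.
- intros a b c H1 H2; apply H; apply H in H1; apply H in H2; exact (Lt _ _ _ H1 H2).
- intros a b H1 H2; apply La; apply H; assumption.
- intros a b; destruct (Lto a b); [left|right]; apply H; assumption.
Qed.

Theorem theorem2p16 (A : Type) (gamma : relation A) (I : Type) :
  partial_order gamma ->
  is_hsdim gamma I ->
  (card_one I ->
     half_space gamma /\
     (linear_order gamma -> is_dim gamma unit) /\
     (~ linear_order gamma -> is_dim gamma bool)) /\
  (card_ge2 I -> is_dim gamma I).
Proof.
intros Hg [[F HF] Hmin]. split.
- intros [i Hi].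
  assert (Heq : forall a b, gamma a b <-> F i a b).
  { intros a b; split.
    - intros H; apply (proj2 HF); exact H.
    - intros H; apply (proj2 HF); intros j; rewrite (Hi j); exact H. }
  assert (Hhs : half_space gamma).
  { destruct (proj1 HF i) as [_ [be [Bq [Btot Bint]]]].
    split; [exact (proj1 Hg)|]. exists be; split; [exact Bq|split].
    - intros a b; destruct (Btot a b); [left; apply Heq|right]; assumption.
    - intros a b; rewrite Heq; apply Bint. }
  split; [exact Hhs|split].
  + intros Hlin. split.
    * exists (fun _ : unit => gamma). split; [intros _; split; [exact Hlin|auto]|].
      intros a b; split; [intros H; exact (H tt) | intros H _; exact H].
    * intros J G HG. destruct (Hmin J G (lin_to_hs _ _ _ _ HG)) as [f _].
      exists (fun _ => f i). intros [] [] _; reflexivity.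
  + intros Hnl. split.
    * apply (core A gamma bool (fun _ => gamma) true false Hg); [|discriminate].
      split; [intros _; exact Hhs|].
      intros a b; split; [intros H; exact (H true) | intros H _; exact H].
    * intros J G HG. destruct (Hmin J G (lin_to_hs _ _ _ _ HG)) as [f _].
      destruct (classic (exists j', j' <> f i)) as [[j' Hj']|Hn].
      -- exists (fun b : bool => if b then f i else j').
         intros [] [] e; try reflexivity; exfalso; apply Hj'; auto.
      -- exfalso; apply Hnl. apply (lin_iff _ _ (G (f i))); [exact (proj1 (proj1 HG (f i)))|].
         intros a b; split.
         ++ intros H; apply (proj2 HG); exact H.
         ++ intros H; apply (proj2 HG); intros j.
            destruct (classic (j = f i)) as [e|e]; [rewrite e; exact H|].
            exfalso; apply Hn; exists j; exact e.
- intros [i [j Hij]]. split.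
  + exact (core A gamma I F i j Hg HF Hij).
  + intros J G HG; exact (Hmin J G (lin_to_hs _ _ _ _ HG)).
Qed.
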